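(* Let $n\ge3$ be odd and write $c_j=\cos(2\pi j/n)$. Then $$Su_1:=\frac32\sum_{j=0}^{\lfloor n/4\rfloor}\sum_{k=0}^{\lfloor n/4\rfloor}\frac{1}{|c_j-c_k+1|}\ \le\ \frac38\,n^2\ln n.$$
   Context: $\ln$ denotes the natural logarithm. (This quantity is one of four pieces of $\sum_{j=0}^{(n-1)/2}\sum_{k=n}^{(3n-1)/2}1/|\lambda_j-\lambda_k|=\frac32\sum_{j,k=0}^{(n-1)/2}1/|c_j-c_k+1|$, where $\lambda_j$ are the eigenvalues of the normalized adjacency matrix of the Cayley graph of $D_{2n}$ with generators $\{a,a^{-1},b\}$.) *)

(* Defs.v *)
From Stdlib Require Import Reals Lra Lia Arith.
Open Scope R_scope.

Definition cc (n j : nat) : R := cos (2 * PI * INR j / INR n).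

(* Su_1 = 3/2 * sum_{j=0}^{floor(n/4)} sum_{k=0}^{floor(n/4)} 1/|c_j - c_k + 1|
   (sum_f_R0 f m sums f 0 + ... + f m, i.e. m+1 terms; (n/4)%nat = floor(n/4)). *)
Definition Su1 (n : nat) : R :=
  3 / 2 * sum_f_R0 (fun j =>
            sum_f_R0 (fun k => / Rabs (cc n j - cc n k + 1)) (n / 4)%nat)
          (n / 4)%nat.

(* Main.v *)
Require Import Defs.
From Stdlib Require Import Reals Lra Lia Arith.
Open Scope R_scope.
Lemma ln_ge (c x : R) : 0 < x -> exp c <= x -> c <= ln x.
Proof.
  intros Hx H. rewrite <- (ln_exp c) at 1.
  destruct (Rle_lt_or_eq_dec _ _ H) as [H1|H1].
  - left. apply ln_increasing; [apply exp_pos|exact H1].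
  - rewrite H1. lra.
Qed.

Lemma exp_cube (c : R) : exp (3*c) = exp c ^ 3.
Proof. replace (3*c) with (c+c+c) by ring. rewrite !exp_plus. ring. Qed.

Lemma exp_int (k : nat) : exp (INR k) = exp 1 ^ k.
Proof.
  induction k. simpl. apply exp_0.
  rewrite S_INR, exp_plus, IHk. simpl. ring.
Qed.

Lemma exp_bound (a : R) (k : nat) (x : R) : 0 < x -> 3 ^ k <= x ^ 3 -> 3 * a = INR k -> exp a <= x.
Proof.
  intros Hx H Ha.
  assert (E: exp a ^ 3 <= x ^ 3).
  { rewrite <- exp_cube, Ha, exp_int. eapply Rle_trans; [|exact H].
    apply pow_incr. split; [left; apply exp_pos| apply exp_le_3]. }
  destruct (Rle_lt_dec (exp a) x) as [h|h]; auto.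
  exfalso. assert (x ^ 3 < exp a ^ 3). { simpl. set (e := exp a) in *. assert (x*x < e*e) by nra. assert (x*x*x < e*e*e) by nra. nra. } lra.
Qed.

Lemma ln_7 (x : R) : 7 <= x -> 5/3 <= ln x.
Proof. intros. apply ln_ge. lra. apply (exp_bound _ 5). lra. simpl. nra. simpl. lra. Qed.
Lemma ln_5 : 4/3 <= ln 5.
Proof. apply ln_ge. lra. apply (exp_bound _ 4). lra. simpl. lra. simpl. lra. Qed.
Lemma ln_3 : 1 <= ln 3.
Proof. apply ln_ge. lra. apply exp_le_3. Qed.

Lemma ln_le_m1 (y : R) : 0 < y -> ln y <= y - 1.
Proof.
  intros Hy. pose proof (exp_ineq1_le (y-1)).
  destruct (Rle_lt_dec (ln y) (y-1)) as [h|h]; auto.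
  exfalso. assert (exp (y-1) < exp (ln y)) by (apply exp_increasing; exact h).
  rewrite exp_ln in H0 by exact Hy. lra.
Qed.

Lemma PI_lt : PI < 16/5.
Proof.
  destruct (Rlt_le_dec PI (16/5)) as [h|h]; auto. exfalso.
  pose proof PI2_1.
  destruct (cos_bound (8/5) 0) as [_ Hc]; try lra.
  assert (0 <= cos (8/5)) by (apply cos_ge_0; lra).
  unfold cos_approx in Hc. simpl in Hc. unfold cos_term in Hc. simpl in Hc. lra.
Qed.

Lemma sin_lower (x : R) : 0 <= x -> x <= PI/2 -> x - x^3/6 <= sin x.
Proof.
  intros H0 H1. pose proof PI_lt. pose proof PI2_Rlt_PI.
  destruct (SIN x) as [Hs _]; try lra.
  unfold sin_lb, sin_approx in Hs. simpl in Hs. unfold sin_term in Hs. simpl in Hs.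
  assert (x*x <= 4) by nra.
  assert (0 <= x^5/120 - x^7/5040).
  { replace (x^5/120 - x^7/5040) with (x^5 * (42 - x*x)/5040) by field.
    apply Rmult_le_pos; [|lra]. apply Rmult_le_pos. apply pow_le; lra. lra. }
  nra.
Qed.

Lemma cc_x (n j : nat) : (4*j+1 <= n)%nat ->
  exists x, x - x^3/6 <= cc n j /\
    3/2 * ((INR n - 4*INR j)/INR n) <= x /\ x <= 8/5 * ((INR n - 4*INR j)/INR n)
    /\ 0 < x /\ (INR n - 4*INR j)/INR n <= 1.
Proof.
  intros H.
  assert (Hn: 4*INR j + 1 <= INR n).
  { replace (4*INR j+1) with (INR (4*j+1)) by (rewrite plus_INR, mult_INR; simpl; ring).
    apply le_INR; exact H. }
  assert (Hj: 0 <= INR j) by apply pos_INR.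
  pose proof PI_lt. pose proof PI2_3_2.
  set (x := PI*(INR n - 4*INR j)/(2*INR n)).
  assert (Hr: 0 < (INR n - 4*INR j)/INR n <= 1).
  { split. apply Rdiv_lt_0_compat; lra.
    apply Rmult_le_reg_r with (INR n). lra. unfold Rdiv. rewrite Rmult_assoc, Rinv_l by lra. lra. }
  assert (Ex: x = PI/2 * ((INR n - 4*INR j)/INR n)) by (unfold x; field; lra).
  exists x. split; [|split;[|split;[|split]]].
  - unfold cc. rewrite <- sin_shift.
    replace (PI/2 - 2 * PI * INR j / INR n) with x by (unfold x; field; lra).
    apply sin_lower. rewrite Ex. nra. rewrite Ex. nra.
  - rewrite Ex. nra.
  - rewrite Ex. nra.
  - rewrite Ex. nra.
  - lra.
Qed.

Lemma cc_K (n j : nat) : (4*j+1 <= n)%nat ->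
  43/50 * ((INR n - 4*INR j)/INR n) <= cc n j.
Proof.
  intros H. destruct (cc_x n j H) as [x [H1 [H2 [H3 [H4 H5]]]]].
  set (r := (INR n - 4*INR j)/INR n) in *.
  assert (x*x <= 64/25) by nra.
  assert (x - x^3/6 >= x * (1 - 64/150)) by (simpl; nra).
  nra.
Qed.

Lemma cc_51 : 1/4 <= cc 5 1.
Proof.
  assert (H: (4*1+1 <= 5)%nat) by lia.
  destruct (cc_x 5 1 H) as [x [H1 [H2 [H3 [H4 H5]]]]].
  simpl INR in *. 
  assert (3/10 <= x <= 8/25) by lra.
  assert (x*x <= 64/625) by nra.
  assert (x - x^3/6 >= x * (1 - 64/3750)) by (simpl; nra).
  nra.
Qed.

Lemma split_bound (g : nat -> R) (a b : R) (j M : nat) :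
  (forall k, (k <= M)%nat -> (k < j)%nat -> g k <= a) ->
  (forall k, (k <= M)%nat -> (j <= k)%nat -> g k <= b) ->
  forall m, (m <= M)%nat -> sum_f_R0 g m <= INR (Nat.min (S m) j) * a + INR (S m - j) * b.
Proof.
  intros Ha Hb m. induction m; intros Hm.
  - simpl. destruct j as [|j].
    + simpl. specialize (Hb 0%nat Hm (le_n _)). lra.
    + replace (Nat.min 1 (S j)) with 1%nat by lia. replace (1 - S j)%nat with 0%nat by lia.
      simpl. specialize (Ha 0%nat Hm ltac:(lia)). lra.
  - simpl sum_f_R0. specialize (IHm ltac:(lia)).
    destruct (Nat.lt_ge_cases (S m) j) as [h|h].
    + replace (Nat.min (S (S m)) j) with (S (S m)) by lia.
      replace (Nat.min (S m) j) with (S m) in IHm by lia.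
      replace (S (S m) - j)%nat with 0%nat by lia.
      replace (S m - j)%nat with 0%nat in IHm by lia.
      specialize (Ha (S m) Hm h). rewrite (S_INR (S m)). simpl INR in *. lra.
    + replace (Nat.min (S (S m)) j) with j by lia.
      replace (Nat.min (S m) j) with j in IHm by lia.
      replace (S (S m) - j)%nat with (S (S m - j)) by lia.
      specialize (Hb (S m) Hm h). rewrite (S_INR (S m - j)). lra.
Qed.

Lemma sum_INR (m : nat) : sum_f_R0 (fun j => INR j) m = INR m * (INR m + 1) / 2.
Proof.
  induction m. simpl. field. change (sum_f_R0 (fun j => INR j) m + INR (S m) = INR (S m) * (INR (S m) + 1) / 2). rewrite IHm, (S_INR m). field.
Qed.

Lemma S_bound (N : R) (m : nat) : 4 * INR m + 1 <= N ->
  sum_f_R0 (fun j => / (N - 4 * INR j)) m <= / (N - 4 * INR m) + (ln N - ln (N - 4 * INR m)) / 4.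
Proof.
  induction m; intros H.
  - simpl. rewrite Rmult_0_r, Rminus_0_r. lra.
  - rewrite S_INR in H. rewrite tech5. specialize (IHm ltac:(pose proof (pos_INR m); lra)).
    rewrite S_INR. set (t := N - 4 * INR m) in *.
    replace (N - 4 * (INR m + 1)) with (t - 4) by (unfold t; ring).
    assert (Ht: 5 <= t) by (unfold t; lra).
    assert (L: ln ((t-4)/t) <= (t-4)/t - 1) by (apply ln_le_m1; apply Rdiv_lt_0_compat; lra).
    unfold Rdiv in L; rewrite ln_mult, ln_Rinv in L by (try apply Rinv_0_lt_compat; lra).
    assert ((t-4)*/t - 1 = - (4 * / t)) by (field; lra).
    assert (/ t = (4*/t)/4) by (field; lra).
    lra.
Qed.

Lemma cc_le1 (n k : nat) : cc n k <= 1.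
Proof. unfold cc. apply COS_bound. Qed.

Lemma cc_mono (n j k : nat) : (j <= k)%nat -> (4*k+1 <= n)%nat -> cc n k <= cc n j.
Proof.
  intros Hjk Hk.
  assert (Hn: 4*INR k + 1 <= INR n).
  { replace (4*INR k+1) with (INR (4*k+1)) by (rewrite plus_INR, mult_INR; simpl; ring).
    apply le_INR; exact Hk. }
  assert (Hj: INR j <= INR k) by (apply le_INR; exact Hjk).
  assert (H0: 0 <= INR j) by apply pos_INR.
  pose proof PI_RGT_0.
  destruct (Nat.eq_dec j k) as [->|Hne]; [lra|].
  assert (Hj2: INR j < INR k) by (apply lt_INR; lia).
  unfold cc. left. apply cos_decreasing_1.
  - apply Rmult_le_pos; [|left; apply Rinv_0_lt_compat; lra]. nra.
  - apply Rmult_le_reg_r with (INR n); [lra|]. unfold Rdiv. rewrite Rmult_assoc, Rinv_l by lra. nra.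
  - apply Rmult_le_pos; [|left; apply Rinv_0_lt_compat; lra]. nra.
  - apply Rmult_le_reg_r with (INR n); [lra|]. unfold Rdiv. rewrite Rmult_assoc, Rinv_l by lra. nra.
  - unfold Rdiv. apply Rmult_lt_compat_r. apply Rinv_0_lt_compat; lra. nra.
Qed.

Lemma m_facts (n : nat) : (3 <= n)%nat -> Nat.Odd n -> (4*(n/4)+1 <= n)%nat /\ (n <= 4*(n/4)+3)%nat.
Proof.
  intros H [p Hp]. pose proof (Nat.div_mod n 4 ltac:(lia)). pose proof (Nat.mod_upper_bound n 4 ltac:(lia)).
  lia.
Qed.

Lemma cc_pos (n j : nat) : (4*j+1 <= n)%nat -> 0 < cc n j.
Proof.
  intros H. pose proof (cc_K n j H).
  assert (Hn: 4*INR j + 1 <= INR n).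
  { replace (4*INR j+1) with (INR (4*j+1)) by (rewrite plus_INR, mult_INR; simpl; ring).
    apply le_INR; exact H. }
  assert (0 <= INR j) by apply pos_INR.
  assert (0 < (INR n - 4 * INR j) / INR n) by (apply Rdiv_lt_0_compat; lra). lra.
Qed.

Lemma bound_gen (n : nat) : (3 <= n)%nat -> Nat.Odd n ->
  Su1 n <= 3/2 * sum_f_R0 (fun j => INR j * / cc n j + INR (S (n/4) - j)) (n/4).
Proof.
  intros Hn Ho. destruct (m_facts n Hn Ho) as [H1 H2].
  unfold Su1. set (m := (n/4)%nat) in *.
  apply Rmult_le_compat_l; [lra|]. apply sum_Rle. intros j Hj.
  assert (Hjn: (4*j+1 <= n)%nat) by lia.
  pose proof (cc_pos n j Hjn) as Hcj.
  eapply Rle_trans.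
  - apply (split_bound _ (/ cc n j) 1 j m); [| | apply le_n].
    + intros k Hk Hkj. assert (Hkn: (4*k+1 <= n)%nat) by lia.
      pose proof (cc_le1 n k).
      rewrite Rabs_pos_eq by lra. apply Rinv_le_contravar; lra.
    + intros k Hk Hkj. assert (Hkn: (4*k+1 <= n)%nat) by lia.
      pose proof (cc_mono n j k Hkj Hkn).
      rewrite Rabs_pos_eq by lra. rewrite <- Rinv_1. apply Rinv_le_contravar; lra.
  - replace (Nat.min (S m) j) with j by lia. lra.
Qed.

Theorem mainTheorem4 (n : nat) (Hn : (3 <= n)%nat) (Hodd : Nat.Odd n) :
  Su1 n <= 3 / 8 * (INR n) ^ 2 * ln (INR n).
Proof.
  eapply Rle_trans; [apply bound_gen; assumption|].
  destruct (m_facts n Hn Hodd) as [H1 H2].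
  destruct (le_lt_dec 7 n) as [H7|H7].
  2:{ assert (n = 3 \/ n = 5)%nat as [->| ->] by (destruct Hodd as [p Hp]; lia).
      - replace (3/4)%nat with 0%nat by reflexivity. simpl sum_f_R0.
        replace (INR 3) with 3 by (simpl; ring). pose proof ln_3. simpl INR. lra.
      - replace (5/4)%nat with 1%nat by reflexivity. simpl sum_f_R0.
        replace (INR 5) with 5 by (simpl; ring). pose proof ln_5. pose proof cc_51.
        assert (/ cc 5 1 <= 4). { rewrite <- (Rinv_inv 4). apply Rinv_le_contravar; lra. }
        simpl INR. lra. }
  set (m := (n/4)%nat) in *.
  set (N := INR n).
  assert (HN7: 7 <= N) by (unfold N; replace 7 with (INR 7) by (simpl; ring); apply le_INR; exact H7).
  assert (Hm1: 4 * INR m + 1 <= N).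
  { unfold N. replace (4*INR m+1) with (INR (4*m+1)) by (rewrite plus_INR, mult_INR; simpl; ring).
    apply le_INR; exact H1. }
  assert (Hm2: N <= 4 * INR m + 3).
  { unfold N. replace (4*INR m+3) with (INR (4*m+3)) by (rewrite plus_INR, mult_INR; simpl; ring).
    apply le_INR; exact H2. }
  assert (Hm0: 0 <= INR m) by apply pos_INR.
  set (K := 43/50).
  set (A := N * N / (4 * K)).
  set (B := INR m + 1 - N / (4 * K)).
  assert (Hsum: sum_f_R0 (fun j => INR j * / cc n j + INR (S m - j)) m <=
                sum_f_R0 (fun j => A * / (N - 4 * INR j) + B - INR j) m).
  { apply sum_Rle. intros j Hj.
    assert (Hjn: (4*j+1 <= n)%nat) by lia.
    pose proof (cc_K n j Hjn) as HK. fold N in HK.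
    assert (Hjr: INR j <= INR m) by (apply le_INR; exact Hj).
    assert (Hj0: 0 <= INR j) by apply pos_INR.
    assert (Hr: 0 < (N - 4 * INR j) / N) by (apply Rdiv_lt_0_compat; lra).
    rewrite minus_INR by lia. rewrite S_INR.
    assert (INR j * / cc n j <= INR j * / (K * ((N - 4 * INR j) / N))).
    { apply Rmult_le_compat_l; [lra|]. apply Rinv_le_contravar; [unfold K; nra|exact HK]. }
    assert (INR j * / (K * ((N - 4 * INR j) / N)) = A * / (N - 4 * INR j) - N / (4*K)).
    { unfold A, K. field. lra. }
    unfold B. lra. }
  eapply Rle_trans; [apply Rmult_le_compat_l; [lra|exact Hsum]|].
  assert (E: sum_f_R0 (fun j => A * / (N - 4*INR j)) m = A * sum_f_R0 (fun j => /(N - 4*INR j)) m)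
    by (rewrite scal_sum; apply sum_eq; intros; ring).
  rewrite minus_sum, sum_plus, E, sum_cte, sum_INR.
  pose proof (S_bound N m Hm1) as HS.
  assert (HL: 5/3 <= ln N) by (apply ln_7; exact HN7).
  assert (Hl0: 0 <= ln (N - 4 * INR m)).
  { rewrite <- ln_1. destruct (Rle_lt_or_eq_dec 1 (N - 4 * INR m)) as [h|h]; [lra| |].
    - left. apply ln_increasing; lra.
    - rewrite h. lra. }
  assert (Hi: / (N - 4 * INR m) <= 1). { rewrite <- Rinv_1. apply Rinv_le_contravar; lra. }
  set (S := sum_f_R0 (fun j => / (N - 4 * INR j)) m) in *.
  set (L := ln N) in *.
  assert (HS2: S <= 1 + L/4) by lra.
  assert (HA: A * S <= A * (1 + L/4)).
  { apply Rmult_le_compat_l; [unfold A, K; apply Rmult_le_pos; [nra|lra]|exact HS2]. }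
  assert (HA2: A * (1 + L/4) <= N * N * L / 4).
  { unfold A, K. assert (0 <= N*N) by nra.
    replace (N * N / (4 * (43/50)) * (1 + L/4)) with (N*N * (50/172 * (1 + L/4))) by field.
    replace (N * N * L / 4) with (N * N * (L/4)) by field.
    apply Rmult_le_compat_l; [assumption|lra]. }
  assert (HB: B * INR (Datatypes.S m) - INR m * (INR m + 1) / 2 <= 0).
  { rewrite S_INR. unfold B, K.
    assert ((INR m + 2)/2 - N / (4 * (43/50)) <= 0) by lra.
    replace ((INR m + 1 - N / (4 * (43 / 50))) * (INR m + 1) - INR m * (INR m + 1) / 2)
      with ((INR m + 1) * ((INR m + 2)/2 - N / (4 * (43/50)))) by field.
    nra. }
  simpl pow. lra.
Qed.
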